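(* Consider the two-stage cooperative cellular/D2D model and the packet grouping procedure described in the context. Every coded packet in the group $\mathcal{M}_l$ cannot be sent by any single device in one D2D transmission, but it can be split into two coded packets (each an XOR of a subset of its constituent packets), each of which is held in full by some device; hence its content can be delivered to all devices over D2D links in exactly two transmission slots.
   Context: Model: a set $\mathcal{N}$ of $N\ge 2$ cooperating devices want a finite packet set $\mathcal{M}$. After a lossy first-stage cellular broadcast, device $n$ holds $\mathcal{H}_n\subseteq\mathcal{M}$ and misses $\mathcal{W}_n=\mathcal{M}\setminus\mathcal{H}_n$; every packet of $\mathcal{M}$ is wanted by some device. Over D2D, a device can broadcast to all other devices a coded packet only if it holds all uncoded packets it is composed of; a coded packet is instantly decodable for a device if it contains exactly one packet from that device's Wants set. Grouping procedure: process the packets $p_1,\dots,p_M$ of $\mathcal{M}$ in order. For $p_m$ form a vector $v_m$ of length $N$ with $v_m[n]=p_m$ if $p_m\in\mathcal{W}_n$ and $v_m[n]=\mathrm{NULL}$ otherwise. If some previously formed vector $v_{m'}$ satisfies $v_{m'}[n]=\mathrm{NULL}$ for every $n$ with $v_m[n]=p_m$, replace $v_{m'}$ by the entrywise sum $v_{m'}+v_m$ (with $p+\mathrm{NULL}=p$) and discard $v_m$; otherwise keep $v_m$. Each final vector defines a coded packet, the XOR of the distinct packets among its non-NULL entries. $\mathcal{M}_c$ consists of the coded packets of vectors whose entries are all equal and non-NULL; $\mathcal{M}_d$ of those of vectors with at least one NULL entry; $\mathcal{M}_l$ of those of the remaining vectors (no NULL entry and at least two distinct entries), i.e., each packet in $\mathcal{M}_l$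 contains exactly one packet from each $\mathcal{W}_n$ and at least two distinct packets. *)

(* Defs.v *)
From mathcomp Require Import all_boot.
Set Implicit Arguments. Unset Strict Implicit. Unset Printing Implicit Defensive.

Section Grouping.
Variables (D P : finType).  (* D = devices N, P = packets M *)
Variable H : D -> {set P}.   (* Has sets after the first stage *)

Definition W (n : D) : {set P} := ~: H n.

(* a grouping vector: entry n is Some p (packet p) or None (NULL) *)
Definition gvec := {ffun D -> option P}.
Definition gnull : gvec := [ffun=> None].

Definition pvec (p : P) : gvec := [ffun n => if p \in W n then Some p else None].

Definition compat (v' v : gvec) : bool :=
  [forall n, (v n != None) ==> (v' n == None)].

Definition vadd (v' v : gvec) : gvec :=
  [ffun n => if v n is Some q then Some q else v' n].

(* one step of the procedure processing packet p; if several previously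
   formed vectors are compatible, any of them may be chosen *)
Inductive group_step (p : P) (st st' : seq gvec) : Prop :=
| GMerge (i : nat) of i < size st & compat (nth gnull st i) (pvec p)
    & st' = set_nth gnull st i (vadd (nth gnull st i) (pvec p))
| GNew of (forall i, i < size st -> ~~ compat (nth gnull st i) (pvec p))
    & st' = rcons st (pvec p).

Inductive grouping : seq P -> seq gvec -> Prop :=
| Gnil : grouping [::] [::]
| Gsnoc ps p st st' of grouping ps st & group_step p st st' :
    grouping (rcons ps p) st'.

End Grouping.

(* the coded packet of a vector, represented by the set of distinct packets
   it XORs together *)
Definition coded (D P : finType) (v : gvec D P) : {set P} :=
  [set p | [exists n, v n == Some p]].

Definition in_Ml (D P : finType) (v : gvec D P) : bool :=
  [forall n, v n != None] && (1 < #|coded v|).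

(* Main.v *)
Require Import Defs.
From mathcomp Require Import all_boot.

Definition Inv {D P : finType} (H : D -> {set P}) (w : gvec D P) :=
  forall n m q, w m = Some q -> (w n == Some q) = (q \in W H n).

Lemma mem_set_nth' (T : eqType) x0 (s : seq T) i y x :
  i < size s -> x \in set_nth x0 s i y -> (x \in s) || (x == y).
Proof.
elim: s i => [|a s IH] [|i] //=; rewrite !inE.
- by move=> _ /orP[->|->]; rewrite ?orbT.
- move=> lt /orP[->//|/(IH _ lt)/orP[->|->]]; by rewrite ?orbT.
Qed.

Lemma inv_pvec (D P : finType) (H : D -> {set P}) p : Inv H (pvec H p).
Proof.
move=> n m q; rewrite !ffunE; case: ifP => // Hm [<-].
by case: ifP => Hn; rewrite ?eqxx.
Qed.

Lemma inv_vadd (D P : finType) (H : D -> {set P}) p w :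
  Inv H w -> compat w (pvec H p) -> Inv H (vadd w (pvec H p)).
Proof.
move=> Iw /forallP C n m q; rewrite !ffunE.
have Cn := C n; rewrite ffunE in Cn.
case: (boolP (p \in W H m)) => Pm.
- case=> <-; case: (boolP (p \in W H n)) => Pn; first by rewrite eqxx.
  apply/eqP => E; have := Iw n n p E; by rewrite E eqxx (negbTE Pn).
- move=> E; case: (boolP (p \in W H n)) => Pn.
  + rewrite Pn /= in Cn; move/eqP: Cn => wn.
    rewrite -(Iw n m q E) wn /=.
    apply/eqP; case=> pq; subst q; have := Iw n m p E; by rewrite wn Pn.
  + exact: Iw n m q E.
Qed.

Lemma inv_grouping {D P : finType} {H : D -> {set P}} {ps st} :
  grouping H ps st -> forall w, w \in st -> Inv H w.
Proof.
elim=> [|ps0 p st0 st' _ IH step] w //.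
case: step => [i lt C ->| _ ->].
- move/(@mem_set_nth' _ _ _ _ _ _ lt)/orP=> [/IH //|/eqP ->].
  apply: inv_vadd => //; apply: IH; exact: mem_nth.
- rewrite mem_rcons inE => /orP[/eqP ->|/IH //]; exact: inv_pvec.
Qed.

Theorem lemma1 (D P : finType) (H : D -> {set P}) (ps : seq P)
    (st : seq (gvec D P)) (v : gvec D P) :
  1 < #|D| ->
  (forall p : P, exists n : D, p \in W H n) ->
  uniq ps -> (forall p : P, p \in ps) ->
  grouping H ps st -> v \in st -> in_Ml v ->
  (* no single device holds all packets of the coded packet *)
  ~ (exists n : D, coded v \subset H n) /\
  (* split into two coded packets, each held in full by some device; the two
     broadcasts together deliver XOR of coded v to every device *)
  (exists (S1 S2 : {set P}) (n1 n2 : D),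
     [/\ S1 != set0, S2 != set0, [disjoint S1 & S2] & S1 :|: S2 = coded v] /\
     S1 \subset H n1 /\ S2 \subset H n2).
Proof.
move=> _ _ _ _ Hg vin /andP[/forallP nn /card_gt1P[p [y [pc yc py]]]].
have Iv := inv_grouping Hg v vin.
split.
  case=> n /subsetP sub; case E: (v n) (nn n) => [q|] // _.
  have qc : q \in coded v by rewrite inE; apply/existsP; exists n; rewrite E.
  have := Iv n n q E; rewrite E eqxx /W inE (sub _ qc) => //.
have pc' := pc; rewrite inE in pc'; case/existsP: pc' => n2 /eqP E2.
have yc' := yc; rewrite inE in yc'; case/existsP: yc' => n1 /eqP E1.
exists [set p], (coded v :\ p), n1, n2; split; [split|split].
- by apply/set0Pn; exists p; rewrite set11.
- by apply/set0Pn; exists y; rewrite in_setD1 yc eq_sym py.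
- by rewrite disjoints1 !inE eqxx.
- exact: setD1K.
- rewrite sub1set; have := Iv n1 n2 p E2; rewrite E1 /W inE.
  case: (p \in H n1) => //= /eqP [yp]; by rewrite yp eqxx in py.
- apply/subsetP => q; rewrite !inE => /andP[qp /existsP[m /eqP Em]].
  have := Iv n2 m q Em; rewrite E2 /W inE.
  case: (q \in H n2) => //= /eqP [pq]; by rewrite pq eqxx in qp.
Qed.
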